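(* Let $\mathcal{X}=\mathcal{Y}=\{0,1\}$ and let $d:\mathcal{X}\times\mathcal{Y}\to\mathbb{R}_{\mathrm{c}}$ be the single-letter distortion measure given by the matrix $d=\begin{bmatrix}0 & d_{0,1}\\ d_{1,0} & 0\end{bmatrix}$ with $d_{0,1}>0$ and $d_{1,0}>0$ computable. Then there exist a sequence of computable input distributions $(P_{X,n})_{n\in\mathbb{N}}$ in $\mathcal{P}_{\mathrm{c}}(\mathcal{X})$ and a computable sequence of distortion levels $(D_n)_{n\in\mathbb{N}}$ such that no function $F_{\mathrm{opt}}$ computing the sequence of optimal transition probabilities $P^{*}_{Y|X,n}\in\mathcal{P}_{\mathrm{opt}}(d,D_n,P_{X,n})$ is Banach–Mazur computable.
   Context: A real number is computable if it is the effective limit of a computable sequence of rationals (with a recursive modulus of convergence); $\mathbb{R}_{\mathrm{c}}$ denotes the computable reals, a sequence of reals (or vectors/matrices) is computable if this can be done uniformly in the index, and $\mathcal{P}_{\mathrm{c}}(\mathcal{X})$ denotes the probability distributions on $\mathcal{X}$ with computable entries. For a source distribution $P_X$, distortion measure $d$ and level $D$, the rate distortion function is $R(D)=\inf\{I(X;Y): P_{Y|X},\ \sum_{x,y}P_X(x)P_{Y|X}(y|x)d(x,y)\leq D\}$ over all test channels $P_{Y|X}$, and $\mathcal{P}_{\mathrm{opt}}(d,D,P_X)$ is the set of test channels attaining the minimum. A function $F_{\mathrm{opt}}$ mapping inputs (source distribution, distortion level) to an optimal test channel is Banach–Mazur computable if it maps every computable sequence of inputs to a computable sequence of outputs. *)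

(* Defs.v *)
From Stdlib Require Import Reals List Arith.
Import ListNotations.
Open Scope R_scope.

Inductive rcode : Type :=
| RZero
| RSucc
| RProj (i : nat)
| RComp (f : rcode) (gs : list rcode)
| RPrec (f g : rcode)
| RMu (f : rcode).

Inductive reval : rcode -> list nat -> nat -> Prop :=
| ev_zero args : reval RZero args 0
| ev_succ args : reval RSucc args (S (hd 0%nat args))
| ev_proj i args : reval (RProj i) args (nth i args 0%nat)
| ev_comp f gs args ys v :
    revals gs args ys -> reval f ys v -> reval (RComp f gs) args v
| ev_prec0 f g args v :
    reval f args v -> reval (RPrec f g) (0%nat :: args) v
| ev_precS f g y args r v :
    reval (RPrec f g) (y :: args) r -> reval g (y :: r :: args) v ->
    reval (RPrec f g) (S y :: args) v
| ev_mu f args n :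
    reval f (n :: args) 0 ->
    (forall m, (m < n)%nat -> exists v, reval f (m :: args) (S v)) ->
    reval (RMu f) args n
with revals : list rcode -> list nat -> list nat -> Prop :=
| evs_nil args : revals nil args nil
| evs_cons g gs args y ys :
    reval g args y -> revals gs args ys -> revals (g :: gs) args (y :: ys).

Definition computable2 (f : nat -> nat -> nat) : Prop :=
  exists c : rcode, forall n k, reval c [n; k] (f n k).

Definition rat_of (a b c : nat) : R := (INR a - INR b) / (INR c + 1).

Definition computable_real_seq (x : nat -> R) : Prop :=
  exists a b c e : nat -> nat -> nat,
    computable2 a /\ computable2 b /\ computable2 c /\ computable2 e /\
    forall n N k, (e n N <= k)%nat ->
      Rabs (rat_of (a n k) (b n k) (c n k) - x n) <= / 2 ^ N.

Definition computable_real (x : R) : Prop := computable_real_seq (fun _ => x).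

(** * Binary alphabets X = Y = {0,1} encoded as bool (false = 0, true = 1) *)
Definition is_dist (p : bool -> R) : Prop :=
  0 <= p false /\ 0 <= p true /\ p false + p true = 1.

(** test channel W x y = P_{Y|X}(y|x) *)
Definition is_channel (W : bool -> bool -> R) : Prop :=
  forall x, is_dist (W x).

Definition sum2 (f : bool -> R) : R := f false + f true.

Definition dist_matrix (d01 d10 : R) (x y : bool) : R :=
  match x, y with
  | false, true => d01
  | true, false => d10
  | _, _ => 0
  end.

Definition avg_distortion (d : bool -> bool -> R) (P : bool -> R)
  (W : bool -> bool -> R) : R :=
  sum2 (fun x => sum2 (fun y => P x * W x y * d x y)).

Definition output_dist (P : bool -> R) (W : bool -> bool -> R) (y : bool) : R :=
  sum2 (fun x => P x * W x y).

Definition mutual_info (P : bool -> R) (W : bool -> bool -> R) : R :=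
  sum2 (fun x => sum2 (fun y =>
    if Req_EM_T (P x * W x y) 0 then 0
    else P x * W x y * ln (W x y / output_dist P W y))).

Definition P_opt (d : bool -> bool -> R) (D : R) (P : bool -> R)
  (W : bool -> bool -> R) : Prop :=
  is_channel W /\ avg_distortion d P W <= D /\
  forall W', is_channel W' -> avg_distortion d P W' <= D ->
    mutual_info P W <= mutual_info P W'.

Definition computable_dist_seq (P : nat -> bool -> R) : Prop :=
  computable_real_seq (fun n => P n false) /\
  computable_real_seq (fun n => P n true).

Definition computable_channel_seq (W : nat -> bool -> bool -> R) : Prop :=
  forall x y, computable_real_seq (fun n => W n x y).

Definition BM_computable (F : (bool -> R) -> R -> (bool -> bool -> R)) : Prop :=
  forall (Pn : nat -> bool -> R) (Dn : nat -> R),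
    (forall n, is_dist (Pn n)) -> computable_dist_seq Pn ->
    computable_real_seq Dn ->
    computable_channel_seq (fun n => F (Pn n) (Dn n)).

(* Main.v *)
Require Import Defs.
From Stdlib Require Import Reals.
Open Scope R_scope.
From Stdlib Require Import List Arith Lia Lra ZArith ClassicalEpsilon.
Import ListNotations.

Section RC.
Local Open Scope nat_scope.

Fixpoint tri (n : nat) : nat := match n with 0 => 0 | S m => tri m + S m end.

Lemma tri_mono : forall a b, a <= b -> tri a <= tri b.
Proof. intros a b H; induction H; simpl; lia. Qed.

Definition npair (x y : nat) : nat := tri (x + y) + y.

Fixpoint cw (z : nat) : nat :=
  match z with
  | 0 => 0
  | S z' => let w := cw z' in if S z' <? tri (S w) then w else S w
  end.

Lemma cw_spec : forall z, tri (cw z) <= z < tri (S (cw z)).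
Proof.
  induction z as [|z IH]; [simpl; lia|].
  cbn [cw]. destruct (Nat.ltb_spec (S z) (tri (S (cw z)) )) as [H|H].
  - split; [lia|exact H].
  - cbn [tri] in *. lia.
Qed.

Lemma cw_unique : forall z w, tri w <= z < tri (S w) -> cw z = w.
Proof.
  intros z w Hw. pose proof (cw_spec z) as Hc.
  destruct (Nat.lt_trichotomy (cw z) w) as [H|[H|H]]; auto.
  - assert (tri (S (cw z)) <= tri w) by (apply tri_mono; lia). lia.
  - assert (tri (S w) <= tri (cw z)) by (apply tri_mono; lia). lia.
Qed.

Definition pi2 (z : nat) : nat := z - tri (cw z).
Definition pi1 (z : nat) : nat := cw z - pi2 z.

Lemma cw_pair : forall x y, cw (npair x y) = x + y.
Proof. intros; apply cw_unique; unfold npair; simpl; lia. Qed.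

Lemma pi2_pair : forall x y, pi2 (npair x y) = y.
Proof. intros; unfold pi2; rewrite cw_pair; unfold npair; lia. Qed.
Lemma pi1_pair : forall x y, pi1 (npair x y) = x.
Proof. intros; unfold pi1; rewrite pi2_pair, cw_pair; lia. Qed.
Lemma pi1_0 : pi1 0 = 0. Proof. reflexivity. Qed.
Lemma pi2_0 : pi2 0 = 0. Proof. reflexivity. Qed.

Lemma pair_surj : forall z, npair (pi1 z) (pi2 z) = z.
Proof.
  intros z. pose proof (cw_spec z) as H. simpl in H. unfold npair, pi1, pi2.
  replace (cw z - (z - tri (cw z)) + (z - tri (cw z))) with (cw z) by lia. lia.
Qed.

Definition ifz (c a b : nat) : nat := match c with 0 => a | S _ => b end.

Definition cst (k : nat) : rcode := Nat.iter k (fun c => RComp RSucc [c]) RZero.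
Definition PRED := RPrec RZero (RProj 0).
Definition ADD := RPrec (RProj 0) (RComp RSucc [RProj 1]).
Definition MUL := RPrec RZero (RComp ADD [RProj 1; RProj 2]).
Definition SUBR := RPrec (RProj 0) (RComp PRED [RProj 1]).
Definition SUB := RComp SUBR [RProj 1; RProj 0].
Definition TRI := RPrec RZero (RComp ADD [RProj 1; RComp RSucc [RProj 0]]).
Definition POW2 := RPrec (cst 1) (RComp ADD [RProj 1; RProj 1]).
Definition IFZ := RPrec (RProj 0) (RProj 3).
Definition CWF := RComp SUB [RComp RSucc [RProj 1]; RComp TRI [RComp RSucc [RProj 0]]].
Definition CW := RMu CWF.

Lemma revals1 : forall c l y, reval c l y -> revals [c] l [y].
Proof. intros; constructor; auto; constructor. Qed.
Lemma revals2 : forall c1 c2 l y1 y2, reval c1 l y1 -> reval c2 l y2 -> revals [c1; c2] l [y1; y2].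
Proof. intros; constructor; auto; constructor; auto; constructor. Qed.
Lemma revals3 : forall c1 c2 c3 l y1 y2 y3, reval c1 l y1 -> reval c2 l y2 -> reval c3 l y3 ->
  revals [c1; c2; c3] l [y1; y2; y3].
Proof. intros; constructor; auto; constructor; auto; constructor; auto; constructor. Qed.

Ltac ev := repeat (econstructor; simpl).

Lemma cst_ok : forall k l, reval (cst k) l k.
Proof. induction k; intros; simpl. constructor. econstructor. econstructor. apply IHk. constructor. constructor. Qed.

Lemma PRED_ok : forall x, reval PRED [x] (pred x).
Proof. induction x; simpl. constructor; constructor. eapply ev_precS. apply IHx. constructor. Qed.

Lemma ADD_ok : forall x y, reval ADD [x; y] (x + y).
Proof.
  induction x; intros y. constructor. constructor.
  eapply ev_precS. apply IHx. econstructor. econstructor. constructor. constructor. constructor.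
Qed.

Lemma MUL_ok : forall x y, reval MUL [x; y] (x * y).
Proof.
  induction x; intros y. constructor. constructor.
  eapply ev_precS. apply IHx. econstructor. econstructor. constructor. econstructor. constructor. constructor.
  simpl. replace (y + x * y) with (x * y + y) by lia. apply ADD_ok.
Qed.

Lemma SUBR_ok : forall y x, reval SUBR [y; x] (x - y).
Proof.
  induction y; intros x. constructor. simpl. replace (x - 0) with x by lia. constructor.
  eapply ev_precS. apply IHy. econstructor. econstructor. constructor. constructor.
  simpl. replace (x - S y) with (pred (x - y)) by lia. apply PRED_ok.
Qed.

Lemma SUB_ok : forall x y, reval SUB [x; y] (x - y).
Proof. intros. econstructor. econstructor. constructor. econstructor. constructor. constructor. apply SUBR_ok. Qed.

Lemma TRI_ok : forall n, reval TRI [n] (tri n).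
Proof.
  induction n. constructor. constructor.
  eapply ev_precS. apply IHn. econstructor. econstructor. constructor. econstructor.
  econstructor. econstructor. constructor. constructor. constructor. constructor.
  apply ADD_ok.
Qed.

Lemma POW2_ok : forall n, reval POW2 [n] (2 ^ n).
Proof.
  induction n. constructor. apply cst_ok.
  eapply ev_precS. apply IHn. econstructor. econstructor. constructor. econstructor. constructor. constructor.
  simpl. replace (2 ^ n + (2 ^ n + 0)) with (2^n + 2^n) by lia. apply ADD_ok.
Qed.

Lemma IFZ_ok : forall c a b, reval IFZ [c; a; b] (ifz c a b).
Proof. destruct c; intros. constructor. constructor. eapply ev_precS with (r := ifz c a b). 
  destruct c; [constructor; constructor|]. eapply ev_precS. 2: constructor.
  Abort.

Lemma IFZ_ok : forall c a b, reval IFZ [c; a; b] (ifz c a b).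
Proof.
  assert (H : forall c a b, reval IFZ [c; a; b] (match c with 0 => a | S _ => b end)).
  { induction c; intros. constructor. constructor. eapply ev_precS. apply IHc. constructor. }
  exact H.
Qed.

Lemma CW_ok : forall z, reval CW [z] (cw z).
Proof.
  intros z. pose proof (cw_spec z) as Hs.
  assert (Hf : forall m, reval CWF [m; z] (S z - tri (S m))).
  { intros m. econstructor. apply revals2.
    - econstructor; [apply revals1; constructor | constructor].
    - econstructor; [apply revals1; econstructor; [apply revals1; constructor| constructor] | apply TRI_ok].
    - simpl. apply SUB_ok. }
  constructor.
  - replace 0 with (S z - tri (S (cw z))) by lia. apply Hf.
  - intros m Hm. exists (z - tri (S m)).
    assert (tri (S m) <= tri (cw z)) by (apply tri_mono; lia).
    replace (S (z - tri (S m))) with (S z - tri (S m)) by lia. apply Hf.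
Qed.

Inductive expr : Type :=
| EVar (i : nat)
| ECst (k : nat)
| ESucc (e : expr)
| EPred (e : expr)
| EAdd (e1 e2 : expr)
| EMul (e1 e2 : expr)
| ESub (e1 e2 : expr)
| ETri (e : expr)
| ECw (e : expr)
| EPow2 (e : expr)
| EIfz (e1 e2 e3 : expr)
| EIter (body cnt init : expr)
| ECall (f : nat -> nat -> nat) (c : rcode) (e1 e2 : expr).

Fixpoint eval (e : expr) (l : list nat) : nat :=
  match e with
  | EVar i => nth i l 0
  | ECst k => k
  | ESucc e => S (eval e l)
  | EPred e => pred (eval e l)
  | EAdd e1 e2 => eval e1 l + eval e2 l
  | EMul e1 e2 => eval e1 l * eval e2 l
  | ESub e1 e2 => eval e1 l - eval e2 l
  | ETri e => tri (eval e l)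
  | ECw e => cw (eval e l)
  | EPow2 e => 2 ^ eval e l
  | EIfz e1 e2 e3 => ifz (eval e1 l) (eval e2 l) (eval e3 l)
  | EIter b c i => Nat.iter (eval c l) (fun x => eval b [x]) (eval i l)
  | ECall f _ e1 e2 => f (eval e1 l) (eval e2 l)
  end.

Fixpoint wf (e : expr) : Prop :=
  match e with
  | EVar _ | ECst _ => True
  | ESucc e | EPred e | ETri e | ECw e | EPow2 e => wf e
  | EAdd e1 e2 | EMul e1 e2 | ESub e1 e2 => wf e1 /\ wf e2
  | EIfz e1 e2 e3 => wf e1 /\ wf e2 /\ wf e3
  | EIter b c i => wf b /\ wf c /\ wf i
  | ECall f c e1 e2 => (forall x y, reval c [x; y] (f x y)) /\ wf e1 /\ wf e2
  end.

Fixpoint compile (e : expr) : rcode :=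
  match e with
  | EVar i => RProj i
  | ECst k => cst k
  | ESucc e => RComp RSucc [compile e]
  | EPred e => RComp PRED [compile e]
  | EAdd e1 e2 => RComp ADD [compile e1; compile e2]
  | EMul e1 e2 => RComp MUL [compile e1; compile e2]
  | ESub e1 e2 => RComp SUB [compile e1; compile e2]
  | ETri e => RComp TRI [compile e]
  | ECw e => RComp CW [compile e]
  | EPow2 e => RComp POW2 [compile e]
  | EIfz e1 e2 e3 => RComp IFZ [compile e1; compile e2; compile e3]
  | EIter b c i => RComp (RPrec (RProj 0) (RComp (compile b) [RProj 1])) [compile c; compile i]
  | ECall _ c e1 e2 => RComp c [compile e1; compile e2]
  end.

Theorem compile_ok : forall e, wf e -> forall l, reval (compile e) l (eval e l).
Proof.
  induction e; simpl; intros Hw l.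
  - constructor.
  - apply cst_ok.
  - econstructor. apply revals1, IHe, Hw. constructor.
  - econstructor. apply revals1, IHe, Hw. apply PRED_ok.
  - destruct Hw. econstructor. apply revals2; [apply IHe1|apply IHe2]; auto. apply ADD_ok.
  - destruct Hw. econstructor. apply revals2; [apply IHe1|apply IHe2]; auto. apply MUL_ok.
  - destruct Hw. econstructor. apply revals2; [apply IHe1|apply IHe2]; auto. apply SUB_ok.
  - econstructor. apply revals1, IHe, Hw. apply TRI_ok.
  - econstructor. apply revals1, IHe, Hw. apply CW_ok.
  - econstructor. apply revals1, IHe, Hw. apply POW2_ok.
  - destruct Hw as [? [? ?]]. econstructor. apply revals3; [apply IHe1|apply IHe2|apply IHe3]; auto. apply IFZ_ok.
  - destruct Hw as [Hb [Hc Hi]]. econstructor. apply revals2; [apply IHe2|apply IHe3]; auto.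
    generalize (eval e2 l) as n. induction n.
    + constructor. constructor.
    + eapply ev_precS. apply IHn. econstructor. apply revals1. constructor. simpl. apply IHe1; auto.
  - destruct Hw as [Hf [H1 H2]]. econstructor. apply revals2; [apply IHe1|apply IHe2]; auto. apply Hf.
Qed.

Lemma expr_computable2 : forall e, wf e -> computable2 (fun n k => eval e [n; k]).
Proof. intros e H. exists (compile e). intros; apply compile_ok; auto. Qed.

End RC.

Section M.
Local Open Scope nat_scope.

Definition hd' n := pi1 (pred n).
Definition tl' n := pi2 (pred n).
Definition cons' x l := S (npair x l).
Definition sel6 t (a0 a1 a2 a3 a4 a5 : nat) :=
  ifz t a0 (ifz (t-1) a1 (ifz (t-2) a2 (ifz (t-3) a3 (ifz (t-4) a4 a5)))).
Definition fEv c a := npair 0 (npair c a).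
Definition fEvL gs a := npair 1 (npair gs a).
Definition fComp f := npair 2 f.
Definition fPrec g y r := npair 3 (npair g (npair y r)).
Definition fMu f n a := npair 4 (npair f (npair n a)).
Definition fCons := npair 5 0.
Definition nthl i l := hd' (Nat.iter i tl' l).

Definition step (s : nat) : nat :=
 let F := pi1 s in let V := pi2 s in
 let fr := hd' F in let F' := tl' F in
 let tag := pi1 fr in let bd := pi2 fr in
 ifz F s (sel6 tag
   (let c := pi1 bd in let a := pi2 bd in let ct := pi1 c in let cb := pi2 c in
      sel6 ct
        (npair F' (cons' 0 V))
        (npair F' (cons' (S (hd' a)) V))
        (npair F' (cons' (nthl cb a) V))
        (npair (cons' (fEvL (pi2 cb) a) (cons' (fComp (pi1 cb)) F')) V)
        (ifz (hd' a) (npair (cons' (fEv (pi1 cb) (tl' a)) F') V)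
             (npair (cons' (fEv c (cons' (pred (hd' a)) (tl' a)))
                   (cons' (fPrec (pi2 cb) (pred (hd' a)) (tl' a)) F')) V))
        (npair (cons' (fEv cb (cons' 0 a)) (cons' (fMu cb 0 a) F')) V))
   (let gs := pi1 bd in let a := pi2 bd in
      ifz gs (npair F' (cons' 0 V))
        (npair (cons' (fEv (hd' gs) a) (cons' (fEvL (tl' gs) a) (cons' fCons F'))) V))
   (npair (cons' (fEv bd (hd' V)) F') (tl' V))
   (let g := pi1 bd in let y := pi1 (pi2 bd) in let r := pi2 (pi2 bd) in
      npair (cons' (fEv g (cons' y (cons' (hd' V) r))) F') (tl' V))
   (let f := pi1 bd in let n := pi1 (pi2 bd) in let a := pi2 (pi2 bd) in
      ifz (hd' V) (npair F' (cons' n (tl' V)))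
        (npair (cons' (fEv f (cons' (S n) a)) (cons' (fMu f (S n) a) F')) (tl' V)))
   (npair F' (cons' (cons' (hd' (tl' V)) (hd' V)) (tl' (tl' V))))).

Definition xpi2 e := ESub e (ETri (ECw e)).
Definition xpi1 e := ESub (ECw e) (xpi2 e).
Definition xpair x y := EAdd (ETri (EAdd x y)) y.
Definition xhd e := xpi1 (EPred e).
Definition xtl e := xpi2 (EPred e).
Definition xcons x l := ESucc (xpair x l).
Definition xsel6 t a0 a1 a2 a3 a4 a5 :=
  EIfz t a0 (EIfz (ESub t (ECst 1)) a1 (EIfz (ESub t (ECst 2)) a2
    (EIfz (ESub t (ECst 3)) a3 (EIfz (ESub t (ECst 4)) a4 a5)))).
Definition xfEv c a := xpair (ECst 0) (xpair c a).
Definition xfEvL gs a := xpair (ECst 1) (xpair gs a).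
Definition xfComp f := xpair (ECst 2) f.
Definition xfPrec g y r := xpair (ECst 3) (xpair g (xpair y r)).
Definition xfMu f n a := xpair (ECst 4) (xpair f (xpair n a)).
Definition xfCons := xpair (ECst 5) (ECst 0).
Definition xnthl i l := xhd (EIter (xtl (EVar 0)) i l).

Definition xstep (s : expr) : expr :=
 let F := xpi1 s in let V := xpi2 s in
 let fr := xhd F in let F' := xtl F in
 let tag := xpi1 fr in let bd := xpi2 fr in
 EIfz F s (xsel6 tag
   (let c := xpi1 bd in let a := xpi2 bd in let ct := xpi1 c in let cb := xpi2 c in
      xsel6 ct
        (xpair F' (xcons (ECst 0) V))
        (xpair F' (xcons (ESucc (xhd a)) V))
        (xpair F' (xcons (xnthl cb a) V))
        (xpair (xcons (xfEvL (xpi2 cb) a) (xcons (xfComp (xpi1 cb)) F')) V)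
        (EIfz (xhd a) (xpair (xcons (xfEv (xpi1 cb) (xtl a)) F') V)
             (xpair (xcons (xfEv c (xcons (EPred (xhd a)) (xtl a)))
                   (xcons (xfPrec (xpi2 cb) (EPred (xhd a)) (xtl a)) F')) V))
        (xpair (xcons (xfEv cb (xcons (ECst 0) a)) (xcons (xfMu cb (ECst 0) a) F')) V))
   (let gs := xpi1 bd in let a := xpi2 bd in
      EIfz gs (xpair F' (xcons (ECst 0) V))
        (xpair (xcons (xfEv (xhd gs) a) (xcons (xfEvL (xtl gs) a) (xcons xfCons F'))) V))
   (xpair (xcons (xfEv bd (xhd V)) F') (xtl V))
   (let g := xpi1 bd in let y := xpi1 (xpi2 bd) in let r := xpi2 (xpi2 bd) in
      xpair (xcons (xfEv g (xcons y (xcons (xhd V) r))) F') (xtl V))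
   (let f := xpi1 bd in let n := xpi1 (xpi2 bd) in let a := xpi2 (xpi2 bd) in
      EIfz (xhd V) (xpair F' (xcons n (xtl V)))
        (xpair (xcons (xfEv f (xcons (ESucc n) a)) (xcons (xfMu f (ESucc n) a) F')) (xtl V)))
   (xpair F' (xcons (xcons (xhd (xtl V)) (xhd V)) (xtl (xtl V))))).

Lemma xstep_eq : forall s, eval (xstep (EVar 0)) [s] = step s.
Proof. intros s. reflexivity. Qed.

End M.

Section C.
Local Open Scope nat_scope.

Definition encl (l : list nat) : nat := fold_right cons' 0 l.

Fixpoint enc (c : rcode) : nat :=
  match c with
  | RZero => npair 0 0
  | RSucc => npair 1 0
  | RProj i => npair 2 i
  | RComp f gs => npair 3 (npair (enc f) (encl (map enc gs)))
  | RPrec f g => npair 4 (npair (enc f) (enc g))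
  | RMu f => npair 5 (enc f)
  end.

Lemma hd_cons : forall x l, hd' (cons' x l) = x.
Proof. intros; unfold hd', cons'; simpl; apply pi1_pair. Qed.
Lemma tl_cons : forall x l, tl' (cons' x l) = l.
Proof. intros; unfold tl', cons'; simpl; apply pi2_pair. Qed.
Lemma hd_0 : hd' 0 = 0. Proof. reflexivity. Qed.
Lemma tl_0 : tl' 0 = 0. Proof. reflexivity. Qed.

Lemma hd_encl : forall l, hd' (encl l) = hd 0 l.
Proof. destruct l; simpl. reflexivity. apply hd_cons. Qed.

Lemma iter_shift : forall (f : nat -> nat) i x, Nat.iter (S i) f x = Nat.iter i f (f x).
Proof. induction i; intros; simpl. reflexivity. simpl in IHi. rewrite IHi. reflexivity. Qed.

Lemma tl_encl : forall l, tl' (encl l) = encl (tl l).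
Proof. destruct l; simpl. reflexivity. apply tl_cons. Qed.

Lemma nthl_encl : forall i l, nthl i (encl l) = nth i l 0.
Proof.
  unfold nthl. induction i; intros l.
  - simpl. rewrite hd_encl. destruct l; reflexivity.
  - rewrite iter_shift, tl_encl, IHi. destruct l; simpl; auto. destruct i; reflexivity.
Qed.

Opaque npair pi1 pi2.

Lemma ifz_cons : forall x l a b, ifz (cons' x l) a b = b. Proof. reflexivity. Qed.
Lemma ifz_S : forall x a b, ifz (S x) a b = b. Proof. reflexivity. Qed.
Lemma ifz_0 : forall a b, ifz 0 a b = a. Proof. reflexivity. Qed.
Lemma sel6_0 : forall a0 a1 a2 a3 a4 a5, sel6 0 a0 a1 a2 a3 a4 a5 = a0. Proof. reflexivity. Qed.
Lemma sel6_1 : forall a0 a1 a2 a3 a4 a5, sel6 1 a0 a1 a2 a3 a4 a5 = a1. Proof. reflexivity. Qed.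
Lemma sel6_2 : forall a0 a1 a2 a3 a4 a5, sel6 2 a0 a1 a2 a3 a4 a5 = a2. Proof. reflexivity. Qed.
Lemma sel6_3 : forall a0 a1 a2 a3 a4 a5, sel6 3 a0 a1 a2 a3 a4 a5 = a3. Proof. reflexivity. Qed.
Lemma sel6_4 : forall a0 a1 a2 a3 a4 a5, sel6 4 a0 a1 a2 a3 a4 a5 = a4. Proof. reflexivity. Qed.
Lemma sel6_5 : forall a0 a1 a2 a3 a4 a5, sel6 5 a0 a1 a2 a3 a4 a5 = a5. Proof. reflexivity. Qed.
Ltac simp0 := repeat (rewrite ?pi1_pair, ?pi2_pair, ?hd_cons, ?tl_cons, ?ifz_cons, ?ifz_S, ?ifz_0; cbn [pred Nat.sub enc]).
Ltac simp := repeat (simp0; rewrite ?sel6_0, ?sel6_1, ?sel6_2, ?sel6_3, ?sel6_4, ?sel6_5).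

Lemma step_zero : forall a K V, step (npair (cons' (fEv (enc RZero) a) K) V) = npair K (cons' 0 V).
Proof. intros. unfold step, fEv; cbn zeta. simp. reflexivity. Qed.


Ltac stp := intros; unfold step, fEv, fEvL, fComp, fPrec, fMu, fCons; cbn zeta; simp; reflexivity.

Lemma st_succ : forall a K V, step (npair (cons' (fEv (enc RSucc) a) K) V) = npair K (cons' (S (hd' a)) V).
Proof. stp. Qed.
Lemma st_proj : forall i a K V, step (npair (cons' (fEv (enc (RProj i)) a) K) V) = npair K (cons' (nthl i a) V).
Proof. stp. Qed.
Lemma st_comp : forall f gs a K V, step (npair (cons' (fEv (enc (RComp f gs)) a) K) V) =
  npair (cons' (fEvL (encl (map enc gs)) a) (cons' (fComp (enc f)) K)) V.
Proof. stp. Qed.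
Lemma st_prec0 : forall f g a K V, step (npair (cons' (fEv (enc (RPrec f g)) (cons' 0 a)) K) V) =
  npair (cons' (fEv (enc f) a) K) V.
Proof. stp. Qed.
Lemma st_precS : forall f g y a K V, step (npair (cons' (fEv (enc (RPrec f g)) (cons' (S y) a)) K) V) =
  npair (cons' (fEv (enc (RPrec f g)) (cons' y a)) (cons' (fPrec (enc g) y a) K)) V.
Proof. stp. Qed.
Lemma st_mu : forall f a K V, step (npair (cons' (fEv (enc (RMu f)) a) K) V) =
  npair (cons' (fEv (enc f) (cons' 0 a)) (cons' (fMu (enc f) 0 a) K)) V.
Proof. stp. Qed.
Lemma st_evl_nil : forall a K V, step (npair (cons' (fEvL 0 a) K) V) = npair K (cons' 0 V).
Proof. stp. Qed.
Lemma st_evl_cons : forall g gs a K V, step (npair (cons' (fEvL (cons' g gs) a) K) V) =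
  npair (cons' (fEv g a) (cons' (fEvL gs a) (cons' fCons K))) V.
Proof. stp. Qed.
Lemma st_compk : forall f ys K V, step (npair (cons' (fComp f) K) (cons' ys V)) = npair (cons' (fEv f ys) K) V.
Proof. stp. Qed.
Lemma st_preck : forall g y r rv K V, step (npair (cons' (fPrec g y r) K) (cons' rv V)) =
  npair (cons' (fEv g (cons' y (cons' rv r))) K) V.
Proof. stp. Qed.
Lemma st_muk0 : forall f n a K V, step (npair (cons' (fMu f n a) K) (cons' 0 V)) = npair K (cons' n V).
Proof. stp. Qed.
Lemma st_mukS : forall f n a w K V, step (npair (cons' (fMu f n a) K) (cons' (S w) V)) =
  npair (cons' (fEv f (cons' (S n) a)) (cons' (fMu f (S n) a) K)) V.
Proof. stp. Qed.
Lemma st_cons : forall ys y K V, step (npair (cons' fCons K) (cons' ys (cons' y V))) = npair K (cons' (cons' y ys) V).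
Proof. stp. Qed.
Lemma st_halt : forall V, step (npair 0 V) = npair 0 V.
Proof. intros; unfold step; cbn zeta. rewrite pi1_pair. reflexivity. Qed.

Definition run t s := Nat.iter t step s.
Definition Reach s s' := exists t, run t s = s'.

Lemma run_S : forall t s, run (S t) s = run t (step s).
Proof. intros; unfold run; apply iter_shift. Qed.
Lemma run_add : forall a b s, run (a + b) s = run b (run a s).
Proof. induction a; intros. reflexivity. change (S a + b) with (S (a + b)). rewrite !run_S, IHa. reflexivity. Qed.

Lemma R_refl : forall s, Reach s s. Proof. exists 0; reflexivity. Qed.
Lemma R_trans : forall s1 s2 s3, Reach s1 s2 -> Reach s2 s3 -> Reach s1 s3.
Proof. intros s1 s2 s3 [a Ha] [b Hb]. exists (a + b). rewrite run_add, Ha; auto. Qed.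
Lemma R_step : forall s1 s2 s3, step s1 = s2 -> Reach s2 s3 -> Reach s1 s3.
Proof. intros s1 s2 s3 H [b Hb]. exists (S b). rewrite run_S, H; auto. Qed.

Lemma mu_loop : forall f a n K V,
  (forall K V, Reach (npair (cons' (fEv f (cons' n a)) K) V) (npair K (cons' 0 V))) ->
  (forall m, m < n -> exists w, forall K V, Reach (npair (cons' (fEv f (cons' m a)) K) V) (npair K (cons' (S w) V))) ->
  forall j, j <= n -> Reach (npair (cons' (fEv f (cons' (n - j) a)) (cons' (fMu f (n - j) a) K)) V) (npair K (cons' n V)).
Proof.
  intros f a n K V Hn Hm j. induction j; intros Hj.
  - rewrite Nat.sub_0_r. eapply R_trans. apply Hn. eapply R_step. apply st_muk0. apply R_refl.
  - destruct (Hm (n - S j)) as [w Hw]. lia.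
    eapply R_trans. apply Hw. eapply R_step. apply st_mukS.
    replace (S (n - S j)) with (n - j) by lia. apply IHj. lia.
Qed.

Lemma comp_ok : forall c args v, reval c args v -> forall K V,
  Reach (npair (cons' (fEv (enc c) (encl args)) K) V) (npair K (cons' v V))
with comps_ok : forall gs args ys, revals gs args ys -> forall K V,
  Reach (npair (cons' (fEvL (encl (map enc gs)) (encl args)) K) V) (npair K (cons' (encl ys) V)).
Proof.
  - intros c args v H. destruct H; intros K V.
    + eapply R_step. apply step_zero. apply R_refl.
    + eapply R_step. apply st_succ. rewrite hd_encl. apply R_refl.
    + eapply R_step. apply st_proj. rewrite nthl_encl. apply R_refl.
    + eapply R_step. apply st_comp. eapply R_trans. apply (comps_ok _ _ _ H).
      eapply R_step. apply st_compk. apply (comp_ok _ _ _ H0).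
    + simpl. eapply R_step. apply st_prec0. apply (comp_ok _ _ _ H).
    + simpl. eapply R_step. apply st_precS. eapply R_trans. apply (comp_ok _ _ _ H).
      eapply R_step. apply st_preck. apply (comp_ok _ _ _ H0).
    + assert (ih : forall m, m < n -> exists w, forall K V,
        Reach (npair (cons' (fEv (enc f) (cons' m (encl args))) K) V) (npair K (cons' (S w) V))).
      { intros m hm. destruct (H0 m hm) as [w Hw]. exists w. exact (comp_ok _ _ _ Hw). }
      eapply R_step. apply st_mu.
      replace 0 with (n - n) at 1 2 by lia.
      apply mu_loop. exact (comp_ok _ _ _ H). exact ih. lia.
  - intros gs args ys H. destruct H; intros K V.
    + simpl. eapply R_step. apply st_evl_nil. apply R_refl.
    + simpl. eapply R_step. apply st_evl_cons. eapply R_trans. apply (comp_ok _ _ _ H).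
      eapply R_trans. apply (comps_ok _ _ _ H0). eapply R_step. apply st_cons. apply R_refl.
Qed.

Transparent npair pi1 pi2.
End C.

Section D.
Local Open Scope nat_scope.

Definition s0 n := npair (cons' (fEv n (cons' n 0)) 0) 0.
Definition body z := ifz (pi1 (pi1 z)) z (npair (step (pi1 z)) (S (pi2 z))).
Definition Hk k n := Nat.iter k body (npair (s0 n) 0).
Definition halted z := pi1 (pi1 z) = 0.

Definition XBODY := EIfz (xpi1 (xpi1 (EVar 0))) (EVar 0)
   (xpair (xstep (xpi1 (EVar 0))) (ESucc (xpi2 (EVar 0)))).
Definition XINIT := xpair (xpair (xcons (xfEv (EVar 0) (xcons (EVar 0) (ECst 0))) (ECst 0)) (ECst 0)) (ECst 0).
Definition XH := EIter XBODY (EVar 1) XINIT.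

Lemma XH_eq : forall n k, eval XH [n; k] = Hk k n.
Proof. intros; reflexivity. Qed.

Fixpoint nocall (e : expr) : bool :=
  match e with
  | EVar _ | ECst _ => true
  | ESucc e | EPred e | ETri e | ECw e | EPow2 e => nocall e
  | EAdd e1 e2 | EMul e1 e2 | ESub e1 e2 => nocall e1 && nocall e2
  | EIfz e1 e2 e3 | EIter e1 e2 e3 => nocall e1 && nocall e2 && nocall e3
  | ECall _ _ _ _ => false
  end.

Lemma nocall_wf : forall e, nocall e = true -> wf e.
Proof.
  induction e; simpl; intros H; repeat rewrite Bool.andb_true_iff in H; try tauto; try discriminate.
Qed.

Lemma comp_computable2 : forall E1 E2, wf E1 -> wf E2 ->
  computable2 (fun n k => eval E1 [eval E2 [n; k]]).
Proof.
  intros E1 E2 H1 H2. exists (RComp (compile E1) [compile E2]). intros n k.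
  econstructor. apply revals1. apply compile_ok; auto. apply compile_ok; auto.
Qed.

Lemma wf_XH : wf XH. Proof. apply nocall_wf; vm_compute; reflexivity. Qed.

Definition XA := EIfz (xpi1 (xpi1 (EVar 0))) (EIfz (xhd (xpi2 (xpi1 (EVar 0)))) (ECst 0) (ECst 1)) (ECst 0).
Definition XB := EIfz (xpi1 (xpi1 (EVar 0))) (EIfz (xhd (xpi2 (xpi1 (EVar 0)))) (ECst 1) (ECst 0)) (ECst 0).
Definition XC := EIfz (xpi1 (xpi1 (EVar 0))) (EPred (EPow2 (ESucc (xpi2 (EVar 0))))) (ECst 0).

Lemma wf_XA : wf XA. Proof. apply nocall_wf; vm_compute; reflexivity. Qed.
Lemma wf_XB : wf XB. Proof. apply nocall_wf; vm_compute; reflexivity. Qed.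
Lemma wf_XC : wf XC. Proof. apply nocall_wf; vm_compute; reflexivity. Qed.

Definition val z := hd' (pi2 (pi1 z)).

Definition dA n k := eval XA [eval XH [n; k]].
Definition dB n k := eval XB [eval XH [n; k]].
Definition dC n k := eval XC [eval XH [n; k]].

Lemma dA_eq : forall n k, dA n k = ifz (pi1 (pi1 (Hk k n))) (ifz (val (Hk k n)) 0 1) 0.
Proof. intros; unfold dA; rewrite XH_eq; reflexivity. Qed.
Lemma dB_eq : forall n k, dB n k = ifz (pi1 (pi1 (Hk k n))) (ifz (val (Hk k n)) 1 0) 0.
Proof. intros; unfold dB; rewrite XH_eq; reflexivity. Qed.
Lemma dC_eq : forall n k, dC n k = ifz (pi1 (pi1 (Hk k n))) (pred (2 ^ (S (pi2 (Hk k n))))) 0.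
Proof. intros; unfold dC; rewrite XH_eq; reflexivity. Qed.

Lemma Hk_S : forall k n, Hk (S k) n = body (Hk k n).
Proof. reflexivity. Qed.

Lemma body_halted : forall z, halted z -> body z = z.
Proof. intros z H; unfold body, halted in *; rewrite H; reflexivity. Qed.

Lemma body_nh : forall z, ~ halted z -> body z = npair (step (pi1 z)) (S (pi2 z)).
Proof. intros z H; unfold body, halted in *. destruct (pi1 (pi1 z)); [congruence|reflexivity]. Qed.

Lemma Hk_stable : forall k n, halted (Hk k n) -> forall j, Hk (j + k) n = Hk k n.
Proof. intros k n H j; induction j. reflexivity. change (S j + k) with (S (j + k)).
  rewrite Hk_S, IHj. apply body_halted; auto. Qed.

Lemma Hk_halted_le : forall k k' n, k <= k' -> halted (Hk k n) -> Hk k' n = Hk k n.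
Proof. intros. replace k' with ((k' - k) + k) by lia. apply Hk_stable; auto. Qed.

Lemma Hk_nh_cnt : forall k n, ~ halted (Hk k n) -> pi2 (Hk k n) = k.
Proof.
  induction k; intros n H. simpl. unfold s0. apply pi2_pair.
  rewrite Hk_S in *. destruct (Nat.eq_dec (pi1 (pi1 (Hk k n))) 0) as [E|E].
  - rewrite body_halted in H by exact E. exfalso; apply H; exact E.
  - rewrite body_nh in * by exact E. rewrite pi2_pair. rewrite IHk; auto.
Qed.

Lemma Hk_cnt_mono : forall j k n, pi2 (Hk k n) <= pi2 (Hk (j + k) n).
Proof.
  induction j; intros. reflexivity. change (S j + k) with (S (j + k)). rewrite Hk_S.
  destruct (Nat.eq_dec (pi1 (pi1 (Hk (j + k) n))) 0) as [E|E].
  - rewrite body_halted by exact E. apply IHj.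
  - rewrite body_nh by exact E. rewrite pi2_pair. specialize (IHj k n). lia.
Qed.

Lemma run_halt : forall j V, run j (npair 0 V) = npair 0 V.
Proof. induction j; intros. reflexivity. rewrite run_S, st_halt. apply IHj. Qed.

Lemma Hk_inv : forall k n, pi1 (Hk k n) = run (pi2 (Hk k n)) (s0 n) /\ pi2 (Hk k n) <= k /\
  (pi2 (Hk k n) = k \/ halted (Hk k n)).
Proof.
  induction k; intros n.
  - simpl. rewrite pi1_pair, pi2_pair. auto.
  - rewrite Hk_S. destruct (IHk n) as [H1 [H2 H3]].
    destruct (Nat.eq_dec (pi1 (pi1 (Hk k n))) 0) as [E|E].
    + rewrite body_halted by exact E. split; [exact H1|split; [lia|right; exact E]].
    + rewrite body_nh by exact E. rewrite pi1_pair, pi2_pair.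
      destruct H3 as [H3|H3]; [|congruence]. rewrite H1, H3.
      split; [reflexivity| split; [lia| left; reflexivity]].
Qed.

Lemma Hk_from_run : forall t n w, run t (s0 n) = npair 0 (cons' w 0) ->
  halted (Hk t n) /\ val (Hk t n) = w.
Proof.
  intros t n w Ht. destruct (Hk_inv t n) as [H1 [H2 H3]].
  assert (E : pi1 (Hk t n) = npair 0 (cons' w 0)).
  { destruct H3 as [H3|H3].
    - rewrite H1, H3; exact Ht.
    - rewrite H1. unfold halted in H3. rewrite H1 in H3.
      replace t with ((pi2 (Hk t n)) + (t - pi2 (Hk t n))) in Ht by lia.
      rewrite run_add in Ht. 
      rewrite <- (pair_surj (run (pi2 (Hk t n)) (s0 n))) in Ht |- *. rewrite H3 in Ht |- *.
      rewrite run_halt in Ht. exact Ht. }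
  unfold halted, val. rewrite E, pi1_pair, pi2_pair, hd_cons. auto.
Qed.

End D.

Section DR.

Definition gd n k := rat_of (dA n k) (dB n k) (dC n k).

Definition sgn (w : nat) : R := match w with O => -1 | S _ => 1 end.

Lemma INR_pred_pow2 : forall m, INR (pred (2 ^ S m)) + 1 = 2 ^ S m.
Proof.
  intros m. assert (H : (1 <= 2 ^ S m)%nat) by (apply Nat.le_succ_l, Nat.neq_0_lt_0, Nat.pow_nonzero; lia).
  rewrite <- S_INR. replace (S (pred (2 ^ S m))) with (2 ^ S m)%nat by lia.
  rewrite pow_INR. replace (INR 2) with 2 by (simpl; lra). reflexivity.
Qed.

Lemma gd_halted : forall n k, halted (Hk k n) ->
  gd n k = sgn (val (Hk k n)) / 2 ^ S (pi2 (Hk k n)).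
Proof.
  intros n k H. unfold gd. rewrite dA_eq, dB_eq, dC_eq. unfold halted in H. rewrite H, !ifz_0.
  unfold rat_of. rewrite INR_pred_pow2. destruct (val (Hk k n)); simpl ifz; simpl sgn; simpl INR; unfold Rdiv; ring.
Qed.

Lemma gd_nh : forall n k, ~ halted (Hk k n) -> gd n k = 0.
Proof.
  intros n k H. unfold gd. rewrite dA_eq, dB_eq, dC_eq. unfold halted in H.
  destruct (pi1 (pi1 (Hk k n))); [congruence|]. simpl. unfold rat_of. simpl. field.
Qed.

Definition delta (n : nat) : R :=
  match excluded_middle_informative (exists k, halted (Hk k n)) with
  | left H => gd n (proj1_sig (constructive_indefinite_description _ H))
  | right _ => 0
  end.

Lemma halted_dec : forall z, {halted z} + {~ halted z}.
Proof. intros z; unfold halted; apply Nat.eq_dec. Qed.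

Lemma delta_halted : forall n k, halted (Hk k n) -> delta n = gd n k.
Proof.
  intros n k H. unfold delta. destruct excluded_middle_informative as [E|E]; [|exfalso; eauto].
  destruct (constructive_indefinite_description _ E) as [k' Hk']. simpl.
  assert (G : forall k1 k2, Hk k1 n = Hk k2 n -> gd n k1 = gd n k2).
  { intros k1 k2 E'. unfold gd. rewrite !dA_eq, !dB_eq, !dC_eq, E'. reflexivity. }
  destruct (Nat.le_ge_cases k k') as [L|L].
  - apply G. apply (Hk_halted_le k k' n L H).
  - symmetry. apply G. apply (Hk_halted_le k' k n L Hk').
Qed.

Lemma pow_pos2 : forall m, 0 < 2 ^ m.
Proof. intros; apply pow_lt; lra. Qed.

Lemma inv_pow_le : forall a b, (a <= b)%nat -> / 2 ^ b <= / 2 ^ a.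
Proof.
  intros a b H. apply Rinv_le_contravar. apply pow_pos2. apply Rle_pow; auto. lra.
Qed.

Lemma sgn_div_abs : forall w m, Rabs (sgn w / 2 ^ m) = / 2 ^ m.
Proof.
  intros w m. pose proof (pow_pos2 m). unfold Rdiv. rewrite Rabs_mult, Rabs_inv.
  rewrite (Rabs_right (2 ^ m)) by lra. destruct w; simpl; [rewrite (Rabs_left (-1)) by lra | rewrite (Rabs_right 1) by lra]; ring.
Qed.

Lemma delta_err : forall n k, Rabs (gd n k - delta n) <= / 2 ^ k.
Proof.
  intros n k. pose proof (pow_pos2 k) as Pk.
  destruct (halted_dec (Hk k n)) as [H|H].
  - rewrite (delta_halted n k H). rewrite Rminus_diag, Rabs_R0. left; apply Rinv_0_lt_compat; auto.
  - rewrite gd_nh by exact H. unfold delta. destruct excluded_middle_informative as [E|E].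
    + destruct (constructive_indefinite_description _ E) as [k' Hk']. simpl.
      assert (L : (k < k')%nat).
      { destruct (Nat.lt_ge_cases k k') as [L|L]; auto. exfalso; apply H.
        rewrite (Hk_halted_le k' k n L Hk'). exact Hk'. }
      rewrite gd_halted by exact Hk'. rewrite Rminus_0_l, Rabs_Ropp, sgn_div_abs.
      apply inv_pow_le.
      pose proof (Hk_cnt_mono (k' - S k) (S k) n) as M.
      replace (k' - S k + S k)%nat with k' in M by lia.
      rewrite Hk_S, body_nh in M by exact H. rewrite pi2_pair, Hk_nh_cnt in M by exact H. lia.
    + rewrite Rminus_0_r, Rabs_R0. left; apply Rinv_0_lt_compat; auto.
Qed.

Lemma delta_bound : forall n, Rabs (delta n) <= / 2.
Proof.
  intros n. unfold delta. destruct excluded_middle_informative as [E|E].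
  - destruct (constructive_indefinite_description _ E) as [k' Hk']. simpl.
    rewrite gd_halted by exact Hk'. rewrite sgn_div_abs. replace (/2) with (/ 2 ^ 1) by (simpl; field).
    apply inv_pow_le. lia.
  - rewrite Rabs_R0. lra.
Qed.

Lemma delta_sign : forall n t w, run t (s0 n) = npair 0 (cons' w 0) ->
  (w = 0%nat -> delta n < 0) /\ (w <> 0%nat -> 0 < delta n).
Proof.
  intros n t w Ht. destruct (Hk_from_run t n w Ht) as [H1 H2].
  rewrite (delta_halted n t H1), gd_halted by exact H1. rewrite H2.
  pose proof (pow_pos2 (S (pi2 (Hk t n)))).
  split; intros Hw.
  - rewrite Hw. simpl sgn. unfold Rdiv. pose proof (Rinv_0_lt_compat _ H). nra.
  - destruct w; [congruence|]. simpl sgn. unfold Rdiv. pose proof (Rinv_0_lt_compat _ H). nra.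
Qed.

Lemma delta_computable : computable_real_seq delta.
Proof.
  exists dA, dB, dC, (fun n N => N). split; [|split; [|split; [|split]]].
  - apply comp_computable2; [apply wf_XA|apply wf_XH].
  - apply comp_computable2; [apply wf_XB|apply wf_XH].
  - apply comp_computable2; [apply wf_XC|apply wf_XH].
  - exists (RProj 1). intros; constructor.
  - intros n N k L. eapply Rle_trans. apply delta_err. apply inv_pow_le; auto.
Qed.

End DR.

Lemma c2_ext : forall E (f : nat -> nat -> nat), wf E -> (forall n k, eval E [n; k] = f n k) -> computable2 f.
Proof.
  intros E f W H. destruct (expr_computable2 E W) as [c Hc]. exists c. intros n k. rewrite <- H. apply Hc.
Qed.

Definition callv f c := ECall f c (EVar 0) (EVar 1).

Lemma INR_S1 : forall c, INR c + 1 = INR (S c).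
Proof. intros; rewrite S_INR; ring. Qed.

Lemma INRp : forall c, 0 < INR c + 1.
Proof. intros; pose proof (pos_INR c); lra. Qed.

Lemma rat_add : forall a1 b1 c1 a2 b2 c2,
  rat_of (a1 * S c2 + a2 * S c1) (b1 * S c2 + b2 * S c1) (c1 * c2 + c1 + c2) =
  rat_of a1 b1 c1 + rat_of a2 b2 c2.
Proof.
  intros. unfold rat_of. rewrite !plus_INR, !mult_INR, !S_INR.
  pose proof (pos_INR c1); pose proof (pos_INR c2). field; repeat split; nra.
Qed.

Lemma rat_opp : forall a b c, rat_of b a c = - rat_of a b c.
Proof. intros; unfold rat_of. pose proof (INRp c). field. lra. Qed.

Lemma rat_mul : forall a1 b1 c1 a2 b2 c2,
  rat_of (a1 * a2 + b1 * b2) (a1 * b2 + b1 * a2) (c1 * c2 + c1 + c2) =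
  rat_of a1 b1 c1 * rat_of a2 b2 c2.
Proof.
  intros. unfold rat_of. rewrite !plus_INR, !mult_INR.
  pose proof (pos_INR c1); pose proof (pos_INR c2). field; repeat split; nra.
Qed.

Lemma rat_pos_lt : forall a b c, 0 < rat_of a b c -> (b < a)%nat.
Proof.
  intros a b c H. unfold rat_of in H. pose proof (INRp c).
  assert (INR b < INR a).
  { apply Rnot_le_lt; intro L. assert ((INR a - INR b) / (INR c + 1) <= 0).
    { unfold Rdiv. assert (0 < / (INR c + 1)) by (apply Rinv_0_lt_compat; lra). nra. } lra. }
  apply INR_lt; auto.
Qed.

Lemma rat_inv : forall a b c, (b < a)%nat -> rat_of (S c) 0 (a - b - 1) = / rat_of a b c.
Proof.
  intros a b c H. unfold rat_of.
  assert (E : INR (a - b - 1) + 1 = INR a - INR b).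
  { rewrite INR_S1. replace (S (a - b - 1)) with (a - b)%nat by lia. rewrite minus_INR by lia. ring. }
  rewrite E. rewrite S_INR. simpl INR. pose proof (INRp c). apply lt_INR in H.
  field. lra.
Qed.

Lemma rat_le_iff : forall a1 b1 c1 a2 b2 c2,
  rat_of a1 b1 c1 <= rat_of a2 b2 c2 <-> (a1 * S c2 + b2 * S c1 <= a2 * S c1 + b1 * S c2)%nat.
Proof.
  intros. unfold rat_of. pose proof (INRp c1) as P1; pose proof (INRp c2) as P2.
  assert (E : (INR a1 - INR b1) / (INR c1 + 1) - (INR a2 - INR b2) / (INR c2 + 1) =
    ((INR a1 * (INR c2 + 1) + INR b2 * (INR c1 + 1)) - (INR a2 * (INR c1 + 1) + INR b1 * (INR c2 + 1)))
      / ((INR c1 + 1) * (INR c2 + 1))) by (field; lra).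
  assert (Pp : 0 < (INR c1 + 1) * (INR c2 + 1)) by nra.
  split; intro H.
  - apply INR_le. rewrite !plus_INR, !mult_INR, !S_INR.
    assert (L : (INR a1 - INR b1) / (INR c1 + 1) - (INR a2 - INR b2) / (INR c2 + 1) <= 0) by lra.
    rewrite E in L. unfold Rdiv in L.
    assert (Ip : 0 < / ((INR c1 + 1) * (INR c2 + 1))) by (apply Rinv_0_lt_compat; auto).
    destruct (Rle_dec ((INR a1 * (INR c2 + 1) + INR b2 * (INR c1 + 1)) - (INR a2 * (INR c1 + 1) + INR b1 * (INR c2 + 1))) 0) as [D|D].
    + lra.
    + exfalso. assert (0 < ((INR a1 * (INR c2 + 1) + INR b2 * (INR c1 + 1)) - (INR a2 * (INR c1 + 1) + INR b1 * (INR c2 + 1))) * / ((INR c1 + 1) * (INR c2 + 1))) by (apply Rmult_lt_0_compat; lra). lra.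
  - apply le_INR in H. rewrite !plus_INR, !mult_INR, !S_INR in H.
    assert (L : (INR a1 - INR b1) / (INR c1 + 1) - (INR a2 - INR b2) / (INR c2 + 1) <= 0).
    { rewrite E. unfold Rdiv. assert (0 < / ((INR c1 + 1) * (INR c2 + 1))) by (apply Rinv_0_lt_compat; auto). nra. }
    lra.
Qed.

Lemma Rabs_le_between : forall x e, Rabs x <= e -> - e <= x <= e.
Proof. intros x e H. unfold Rabs in H. destruct (Rcase_abs x); lra. Qed.

Lemma Rmin_lip : forall a b x y e, Rabs (a - x) <= e -> Rabs (b - y) <= e -> Rabs (Rmin a b - Rmin x y) <= e.
Proof.
  intros a b x y e H1 H2. apply Rabs_le. apply Rabs_le_between in H1. apply Rabs_le_between in H2.
  unfold Rmin. destruct (Rle_dec a b); destruct (Rle_dec x y); lra.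
Qed.

Lemma pow2_S : forall N, / 2 ^ S N = / 2 * / 2 ^ N.
Proof. intros. simpl. rewrite Rinv_mult. ring. Qed.

Lemma pow2_pos : forall N, 0 < 2 ^ N.
Proof. intros; apply pow_lt; lra. Qed.

Definition nmax (x y : nat) := (x - y + y)%nat.
Lemma nmax_l : forall x y, (x <= nmax x y)%nat. Proof. unfold nmax; lia. Qed.
Lemma nmax_r : forall x y, (y <= nmax x y)%nat. Proof. unfold nmax; lia. Qed.

Lemma c2_compose : forall f g h, computable2 f -> computable2 g -> computable2 h ->
  computable2 (fun n k => f (g n k) (h n k)).
Proof.
  intros f g h [cf Hf] [cg Hg] [ch Hh].
  apply (c2_ext (ECall f cf (callv g cg) (callv h ch))); simpl; auto.
Qed.

Lemma c2_c : forall m, computable2 (fun _ _ => m).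
Proof. intros m; apply (c2_ext (ECst m)); simpl; auto. Qed.
Lemma c2_p0 : computable2 (fun n _ => n).
Proof. apply (c2_ext (EVar 0)); simpl; auto. Qed.
Lemma c2_p1 : computable2 (fun _ k => k).
Proof. apply (c2_ext (EVar 1)); simpl; auto. Qed.
Lemma c2_add : forall f g, computable2 f -> computable2 g -> computable2 (fun n k => f n k + g n k)%nat.
Proof. intros f g Hf Hg. apply (c2_compose (fun x y => x + y)%nat); auto. apply (c2_ext (EAdd (EVar 0) (EVar 1))); simpl; auto. Qed.
Lemma c2_mul : forall f g, computable2 f -> computable2 g -> computable2 (fun n k => f n k * g n k)%nat.
Proof. intros f g Hf Hg. apply (c2_compose (fun x y => x * y)%nat); auto. apply (c2_ext (EMul (EVar 0) (EVar 1))); simpl; auto. Qed.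
Lemma c2_sub : forall f g, computable2 f -> computable2 g -> computable2 (fun n k => f n k - g n k)%nat.
Proof. intros f g Hf Hg. apply (c2_compose (fun x y => x - y)%nat); auto. apply (c2_ext (ESub (EVar 0) (EVar 1))); simpl; auto. Qed.
Lemma c2_S : forall f, computable2 f -> computable2 (fun n k => S (f n k)).
Proof. intros f Hf. apply (c2_compose (fun x _ => S x) f f); auto. apply (c2_ext (ESucc (EVar 0))); simpl; auto. Qed.
Lemma c2_ifz : forall f g h, computable2 f -> computable2 g -> computable2 h -> computable2 (fun n k => ifz (f n k) (g n k) (h n k)).
Proof.
  intros f g h [cf Hf] [cg Hg] [ch Hh].
  apply (c2_ext (EIfz (callv f cf) (callv g cg) (callv h ch))); simpl; auto.
Qed.
Lemma c2_nmax : forall f g, computable2 f -> computable2 g -> computable2 (fun n k => nmax (f n k) (g n k)).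
Proof. intros. unfold nmax. apply c2_add; auto. apply c2_sub; auto. Qed.

Create HintDb c2db.
#[export] Hint Resolve c2_c c2_p0 c2_p1 c2_add c2_mul c2_sub c2_S c2_ifz c2_nmax : c2db.
Ltac c2 := repeat first [ assumption | apply c2_p0 | apply c2_p1 | apply c2_c | apply c2_add | apply c2_mul | apply c2_sub | apply c2_S | apply c2_ifz | apply c2_nmax ].

Lemma crs_const : forall a b c, computable_real_seq (fun _ => rat_of a b c).
Proof.
  intros a b c. exists (fun _ _ => a), (fun _ _ => b), (fun _ _ => c), (fun _ _ => 0%nat).
  split; [|split; [|split; [|split]]].
  - c2.
  - c2.
  - c2.
  - c2.
  - intros. rewrite Rminus_diag, Rabs_R0. left; apply Rinv_0_lt_compat, pow2_pos.
Qed.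

Lemma crs_add : forall x y, computable_real_seq x -> computable_real_seq y -> computable_real_seq (fun n => x n + y n).
Proof.
  intros x y [a1 [b1 [c1 [e1 [A1 [B1 [C1 [E1 H1]]]]]]]] [a2 [b2 [c2 [e2 [A2 [B2 [C2 [E2 H2]]]]]]]].
  exists (fun n k => a1 n k * S (c2 n k) + a2 n k * S (c1 n k))%nat,
         (fun n k => b1 n k * S (c2 n k) + b2 n k * S (c1 n k))%nat,
         (fun n k => c1 n k * c2 n k + c1 n k + c2 n k)%nat,
         (fun n N => nmax (e1 n (S N)) (e2 n (S N))).
  split; [|split; [|split; [|split]]].
  - c2.
  - c2.
  - c2.
  - apply c2_nmax; apply (c2_compose _ (fun n _ => n) (fun _ N => S N)); c2.
  - intros n N k L. rewrite rat_add.
    assert (L1 : (e1 n (S N) <= k)%nat) by (eapply Nat.le_trans; [apply nmax_l|exact L]).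
    assert (L2 : (e2 n (S N) <= k)%nat) by (eapply Nat.le_trans; [apply nmax_r|exact L]).
    specialize (H1 n (S N) k L1). specialize (H2 n (S N) k L2). rewrite pow2_S in H1, H2.
    replace (rat_of (a1 n k) (b1 n k) (c1 n k) + rat_of (a2 n k) (b2 n k) (c2 n k) - (x n + y n))
      with ((rat_of (a1 n k) (b1 n k) (c1 n k) - x n) + (rat_of (a2 n k) (b2 n k) (c2 n k) - y n)) by ring.
    eapply Rle_trans. apply Rabs_triang. lra.
Qed.

Lemma crs_opp : forall x, computable_real_seq x -> computable_real_seq (fun n => - x n).
Proof.
  intros x [a1 [b1 [c1 [e1 [A1 [B1 [C1 [E1 H1]]]]]]]].
  exists b1, a1, c1, e1. split; [|split; [|split; [|split]]]; auto.
  intros n N k L. rewrite rat_opp. replace (- rat_of (a1 n k) (b1 n k) (c1 n k) - - x n)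
    with (- (rat_of (a1 n k) (b1 n k) (c1 n k) - x n)) by ring. rewrite Rabs_Ropp. auto.
Qed.

Lemma pow2_add : forall a b, / 2 ^ (a + b) = / 2 ^ a * / 2 ^ b.
Proof. intros. rewrite pow_add, Rinv_mult. reflexivity. Qed.

Lemma pow2_inv_mul : forall B, 2 ^ B * / 2 ^ B = 1.
Proof. intros. apply Rinv_r. apply Rgt_not_eq, pow2_pos. Qed.

Lemma crs_mul : forall x y B, (forall n, Rabs (x n) <= 2 ^ B) -> (forall n, Rabs (y n) <= 2 ^ B) ->
  computable_real_seq x -> computable_real_seq y -> computable_real_seq (fun n => x n * y n).
Proof.
  intros x y B Bx By [a1 [b1 [c1 [e1 [A1 [B1 [C1 [E1 H1]]]]]]]] [a2 [b2 [c2 [e2 [A2 [B2 [C2 [E2 H2]]]]]]]].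
  exists (fun n k => a1 n k * a2 n k + b1 n k * b2 n k)%nat,
         (fun n k => a1 n k * b2 n k + b1 n k * a2 n k)%nat,
         (fun n k => c1 n k * c2 n k + c1 n k + c2 n k)%nat,
         (fun n N => nmax (e1 n (N + B + 2)%nat) (e2 n (N + B + 2)%nat)).
  split; [|split; [|split; [|split]]].
  - c2.
  - c2.
  - c2.
  - apply c2_nmax; apply (c2_compose _ (fun n _ => n) (fun _ N => N + B + 2)%nat); c2.
  - intros n N k L. rewrite rat_mul.
    assert (L1 : (e1 n (N + B + 2) <= k)%nat) by (eapply Nat.le_trans; [apply nmax_l|exact L]).
    assert (L2 : (e2 n (N + B + 2) <= k)%nat) by (eapply Nat.le_trans; [apply nmax_r|exact L]).
    specialize (H1 n _ k L1). specialize (H2 n _ k L2).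
    set (q1 := rat_of (a1 n k) (b1 n k) (c1 n k)) in *.
    set (q2 := rat_of (a2 n k) (b2 n k) (c2 n k)) in *.
    rewrite !pow2_add in H1, H2. simpl (2 ^ 2) in H1, H2.
    set (eps := / 2 ^ N) in *. set (iB := / 2 ^ B) in *.
    assert (PB : 2 ^ B * iB = 1) by apply pow2_inv_mul.
    assert (Pe : 0 < eps) by (apply Rinv_0_lt_compat, pow2_pos).
    assert (PiB : 0 < iB) by (apply Rinv_0_lt_compat, pow2_pos).
    pose proof (pow2_pos B) as P2B.
    assert (Hq1 : Rabs q1 <= 2 ^ B + 1).
    { replace q1 with ((q1 - x n) + x n) by ring. eapply Rle_trans. apply Rabs_triang.
      specialize (Bx n). assert (eps * iB * / (2 * (2 * 1)) <= 1).
      { assert (eps <= 1) by (unfold eps; rewrite <- Rinv_1; apply Rinv_le_contravar; [lra| apply pow_R1_Rle; lra]).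
        assert (iB <= 1) by (unfold iB; rewrite <- Rinv_1; apply Rinv_le_contravar; [lra| apply pow_R1_Rle; lra]).
        nra. }
      lra. }
    replace (q1 * q2 - x n * y n) with (q1 * (q2 - y n) + y n * (q1 - x n)) by ring.
    eapply Rle_trans. apply Rabs_triang. rewrite !Rabs_mult.
    specialize (By n).
    assert (T1 : Rabs q1 * Rabs (q2 - y n) <= (2 ^ B + 1) * (eps * iB * / (2 * (2 * 1)))).
    { apply Rmult_le_compat; auto using Rabs_pos. }
    assert (T2 : Rabs (y n) * Rabs (q1 - x n) <= 2 ^ B * (eps * iB * / (2 * (2 * 1)))).
    { apply Rmult_le_compat; auto using Rabs_pos. }
    assert (iB <= 1) by (unfold iB; rewrite <- Rinv_1; apply Rinv_le_contravar; [lra| apply pow_R1_Rle; lra]).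
    assert (E : (2 ^ B + 1) * (eps * iB * / (2 * (2 * 1))) + 2 ^ B * (eps * iB * / (2 * (2 * 1)))
      = eps * (2 * (2 ^ B * iB) + iB) / 4) by field.
    rewrite PB in E. nra.
Qed.

Lemma crs_inv : forall x L, (forall n, / 2 ^ L <= x n) ->
  computable_real_seq x -> computable_real_seq (fun n => / x n).
Proof.
  intros x L Lx [a1 [b1 [c1 [e1 [A1 [B1 [C1 [E1 H1]]]]]]]].
  exists (fun n k => S (c1 n k)), (fun _ _ => 0%nat), (fun n k => a1 n k - b1 n k - 1)%nat,
         (fun n N => e1 n (N + L + L + 1)%nat).
  split; [|split; [|split; [|split]]].
  - c2.
  - c2.
  - c2.
  - apply (c2_compose _ (fun n _ => n) (fun _ N => N + L + L + 1)%nat); c2.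
  - intros n N k Lk. specialize (H1 n _ k Lk). specialize (Lx n).
    set (q := rat_of (a1 n k) (b1 n k) (c1 n k)) in *.
    rewrite !pow2_add in H1. simpl (2 ^ 1) in H1. rewrite Rmult_1_r in H1.
    set (eps := / 2 ^ N) in *. set (iL := / 2 ^ L) in *.
    assert (Pe : 0 < eps) by (apply Rinv_0_lt_compat, pow2_pos).
    assert (PiL : 0 < iL) by (apply Rinv_0_lt_compat, pow2_pos).
    assert (eps <= 1) by (unfold eps; rewrite <- Rinv_1; apply Rinv_le_contravar; [lra| apply pow_R1_Rle; lra]).
    assert (iL <= 1) by (unfold iL; rewrite <- Rinv_1; apply Rinv_le_contravar; [lra| apply pow_R1_Rle; lra]).
    apply Rabs_le_between in H1.
    assert (Hq : iL / 2 <= q) by nra.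
    rewrite (rat_inv (a1 n k) (b1 n k) (c1 n k)) by (apply (rat_pos_lt _ _ (c1 n k)); fold q; lra).
    fold q.
    assert (PL : 2 ^ L * iL = 1) by apply pow2_inv_mul.
    pose proof (pow2_pos L).
    replace (/ q - / x n) with ((x n - q) / (q * x n)) by (field; lra).
    unfold Rdiv. rewrite Rabs_mult. rewrite (Rabs_right (/ (q * x n))) by (left; apply Rinv_0_lt_compat; nra).
    assert (Hinv : / (q * x n) <= 2 ^ L * 2 ^ L * 2).
    { rewrite <- (Rinv_inv (2 ^ L * 2 ^ L * 2)). apply Rinv_le_contravar.
      apply Rinv_0_lt_compat; nra.
      rewrite !Rinv_mult. fold iL. nra. }
    assert (Ha : Rabs (x n - q) <= eps * iL * iL * / 2).
    { apply Rabs_le. lra. }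
    assert (0 <= Rabs (x n - q)) by apply Rabs_pos.
    assert (H5 : Rabs (x n - q) * / (q * x n) <= (eps * iL * iL * / 2) * (2 ^ L * 2 ^ L * 2)).
    { apply Rmult_le_compat; auto. left; apply Rinv_0_lt_compat; nra. }
    replace ((eps * iL * iL * / 2) * (2 ^ L * 2 ^ L * 2)) with (eps * (2 ^ L * iL) * (2 ^ L * iL)) in H5 by field.
    rewrite PL in H5. lra.
Qed.

Lemma crs_min : forall x y, computable_real_seq x -> computable_real_seq y -> computable_real_seq (fun n => Rmin (x n) (y n)).
Proof.
  intros x y [a1 [b1 [c1 [e1 [A1 [B1 [C1 [E1 H1]]]]]]]] [a2 [b2 [c2 [e2 [A2 [B2 [C2 [E2 H2]]]]]]]].
  set (T := fun n k => ((a1 n k * S (c2 n k) + b2 n k * S (c1 n k)) - (a2 n k * S (c1 n k) + b1 n k * S (c2 n k)))%nat).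
  assert (CT : computable2 T) by (unfold T; c2).
  exists (fun n k => ifz (T n k) (a1 n k) (a2 n k)), (fun n k => ifz (T n k) (b1 n k) (b2 n k)),
         (fun n k => ifz (T n k) (c1 n k) (c2 n k)), (fun n N => nmax (e1 n N) (e2 n N)).
  split; [|split; [|split; [|split]]].
  - c2.
  - c2.
  - c2.
  - c2.
  - intros n N k L.
    assert (L1 : (e1 n N <= k)%nat) by (eapply Nat.le_trans; [apply nmax_l|exact L]).
    assert (L2 : (e2 n N <= k)%nat) by (eapply Nat.le_trans; [apply nmax_r|exact L]).
    specialize (H1 n _ k L1). specialize (H2 n _ k L2).
    assert (E : rat_of (ifz (T n k) (a1 n k) (a2 n k)) (ifz (T n k) (b1 n k) (b2 n k)) (ifz (T n k) (c1 n k) (c2 n k))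
       = Rmin (rat_of (a1 n k) (b1 n k) (c1 n k)) (rat_of (a2 n k) (b2 n k) (c2 n k))).
    { unfold T. destruct (Nat.le_gt_cases (a1 n k * S (c2 n k) + b2 n k * S (c1 n k)) (a2 n k * S (c1 n k) + b1 n k * S (c2 n k))) as [G|G].
      - replace (a1 n k * S (c2 n k) + b2 n k * S (c1 n k) - (a2 n k * S (c1 n k) + b1 n k * S (c2 n k)))%nat with 0%nat by lia.
        simpl. rewrite Rmin_left; auto. apply rat_le_iff; auto.
      - destruct (a1 n k * S (c2 n k) + b2 n k * S (c1 n k) - (a2 n k * S (c1 n k) + b1 n k * S (c2 n k)))%nat eqn:Z; [lia|].
        simpl. rewrite Rmin_right; auto. 
        assert (~ rat_of (a1 n k) (b1 n k) (c1 n k) <= rat_of (a2 n k) (b2 n k) (c2 n k)).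
        { rewrite rat_le_iff. lia. }
        lra. }
    rewrite E. apply Rmin_lip; auto.
Qed.

Lemma ln_ge : forall z, 0 < z -> 1 - / z <= ln z.
Proof.
  intros z Hz. pose proof (exp_ineq1_le (- ln z)). rewrite exp_Ropp, exp_ln in H by auto. lra.
Qed.

Lemma ln_gt : forall z, 0 < z -> z <> 1 -> 1 - / z < ln z.
Proof.
  intros z Hz Hn. assert (- ln z <> 0).
  { intro E. apply Hn. assert (ln z = 0) by lra. rewrite <- (exp_ln z Hz), H. apply exp_0. }
  pose proof (exp_ineq1 (- ln z) H). rewrite exp_Ropp, exp_ln in H0 by auto. lra.
Qed.

Definition term (P : bool -> R) (W : bool -> bool -> R) x y :=
  if Req_EM_T (P x * W x y) 0 then 0 else P x * W x y * ln (W x y / output_dist P W y).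

Lemma out_ge : forall P W x y, is_dist P -> is_channel W -> P x * W x y <= output_dist P W y.
Proof.
  intros P W x y [P0 [P1 _]] HW. unfold output_dist, sum2.
  destruct (HW false) as [A [B _]]; destruct (HW true) as [C [D _]].
  destruct x, y; nra.
Qed.

Lemma out_nonneg : forall P W y, is_dist P -> is_channel W -> 0 <= output_dist P W y.
Proof.
  intros P W y [P0 [P1 _]] HW. unfold output_dist, sum2.
  destruct (HW false) as [A [B _]]; destruct (HW true) as [C [D _]]. destruct y; nra.
Qed.

Lemma term_ge : forall P W x y, is_dist P -> is_channel W -> 0 < P x ->
  P x * W x y - P x * output_dist P W y <= term P W x y /\
  (term P W x y <= P x * W x y - P x * output_dist P W y -> W x y = output_dist P W y).
Proof.
  intros P W x y HP HW Px. pose proof (out_ge P W x y HP HW) as Og. pose proof (out_nonneg P W y HP HW) as On.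
  assert (Wn : 0 <= W x y) by (destruct (HW x) as [A [B _]]; destruct y; auto).
  unfold term. destruct (Req_EM_T (P x * W x y) 0) as [E|E].
  - assert (W0 : W x y = 0).
    { destruct (Rmult_integral _ _ E); auto. lra. }
    split. nra. intros H. rewrite W0 in *. assert (P x * output_dist P W y <= 0) by lra. nra.
  - assert (Wp : 0 < W x y) by (destruct Wn as [Wn|Wn]; auto; rewrite <- Wn in E; lra).
    assert (Op : 0 < output_dist P W y) by nra.
    assert (Zp : 0 < W x y / output_dist P W y) by (apply Rdiv_lt_0_compat; auto).
    assert (Inv : / (W x y / output_dist P W y) = output_dist P W y / W x y) by (field; lra).
    assert (PWp : 0 < P x * W x y) by nra.
    split.
    + pose proof (ln_ge _ Zp) as L. rewrite Inv in L.
      assert (P x * W x y * (1 - output_dist P W y / W x y) <= P x * W x y * ln (W x y / output_dist P W y))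
        by (apply Rmult_le_compat_l; lra).
      replace (P x * W x y * (1 - output_dist P W y / W x y)) with (P x * W x y - P x * output_dist P W y) in H
        by (field; lra). lra.
    + intros H. destruct (Req_dec (W x y / output_dist P W y) 1) as [Q|Q].
      * assert (W x y = 1 * output_dist P W y) by (rewrite <- Q; field; lra). lra.
      * exfalso. pose proof (ln_gt _ Zp Q) as L. rewrite Inv in L.
        assert (P x * W x y * (1 - output_dist P W y / W x y) < P x * W x y * ln (W x y / output_dist P W y))
          by (apply Rmult_lt_compat_l; lra).
        replace (P x * W x y * (1 - output_dist P W y / W x y)) with (P x * W x y - P x * output_dist P W y) in H0
          by (field; lra). lra.
Qed.

Lemma mi_zero_rows : forall P W, is_dist P -> is_channel W -> 0 < P false -> 0 < P true ->
  mutual_info P W <= 0 -> forall y, W false y = W true y.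
Proof.
  intros P W HP HW P0 P1 Hm.
  assert (Hs : mutual_info P W = term P W false false + term P W false true + term P W true false + term P W true true)
    by (unfold mutual_info, sum2, term; ring_simplify; reflexivity).
  destruct (term_ge P W false false HP HW P0) as [A1 B1].
  destruct (term_ge P W false true HP HW P0) as [A2 B2].
  destruct (term_ge P W true false HP HW P1) as [A3 B3].
  destruct (term_ge P W true true HP HW P1) as [A4 B4].
  destruct HP as [_ [_ Ps]]. destruct (HW false) as [_ [_ S0]]; destruct (HW true) as [_ [_ S1]].
  assert (Osum : output_dist P W false + output_dist P W true = 1).
  { unfold output_dist, sum2. replace 1 with (P false * (W false false + W false true) + P true * (W true false + W true true)) by (rewrite S0, S1; lra). ring. }
  assert (Tot : (P false * W false false - P false * output_dist P W false) + (P false * W false true - P false * output_dist P W true)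
    + (P true * W true false - P true * output_dist P W false) + (P true * W true true - P true * output_dist P W true) = 0).
  { assert (Pt : P true = 1 - P false) by lra. unfold output_dist, sum2 in *. rewrite Pt in *.
    assert (Wt : W false true = 1 - W false false) by lra. assert (Wt2 : W true true = 1 - W true false) by lra.
    rewrite Wt, Wt2. ring. }
  assert (E1 := B1 ltac:(lra)). assert (E2 := B2 ltac:(lra)). assert (E3 := B3 ltac:(lra)). assert (E4 := B4 ltac:(lra)).
  intros []; congruence.
Qed.

Definition Pp (p : R) : bool -> R := fun b => if b then p else 1 - p.
Definition Wc (o : bool) : bool -> bool -> R := fun _ y => if Bool.eqb y o then 1 else 0.

Lemma Wc_channel : forall o, is_channel (Wc o).
Proof. intros o x. unfold is_dist, Wc. destruct o; simpl; lra. Qed.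

Lemma term_zero : forall P W x y, W x y = output_dist P W y -> term P W x y = 0.
Proof.
  intros P W x y H. unfold term. destruct (Req_EM_T (P x * W x y) 0) as [E|E]; auto.
  assert (W x y <> 0) by (intro Z; apply E; rewrite Z; ring).
  rewrite <- H. unfold Rdiv. rewrite Rinv_r by auto. rewrite ln_1. ring.
Qed.

Lemma mi_terms : forall P W, mutual_info P W = term P W false false + term P W false true + term P W true false + term P W true true.
Proof. intros. unfold mutual_info, sum2, term; ring_simplify; reflexivity. Qed.

Lemma Wc_mi : forall p o, mutual_info (Pp p) (Wc o) = 0.
Proof.
  intros p o. rewrite mi_terms. rewrite !term_zero; [ring| | | |];
  unfold output_dist, sum2, Wc, Pp; destruct o; simpl; ring.
Qed.

Lemma avg_Wc : forall u v p o, avg_distortion (dist_matrix u v) (Pp p) (Wc o) = if o then (1 - p) * u else p * v.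
Proof. intros. unfold avg_distortion, sum2, dist_matrix, Pp, Wc. destruct o; simpl; ring. Qed.

Lemma forced : forall u v p D W, 0 < u -> 0 < v -> 0 < p < 1 ->
  P_opt (dist_matrix u v) D (Pp p) W ->
  (p * v < (1 - p) * u -> D = p * v -> W false false = 1) /\ ((1 - p) * u < p * v -> D = (1 - p) * u -> W false false = 0).
Proof.
  intros u v p D W Hu Hv Hp [HW [HD Hmin]].
  assert (HP : is_dist (Pp p)) by (unfold is_dist, Pp; simpl; lra).
  assert (Rows : forall o, avg_distortion (dist_matrix u v) (Pp p) (Wc o) <= D ->
     forall y, W false y = W true y).
  { intros o Ho. apply (mi_zero_rows (Pp p)); auto; try (unfold Pp; simpl; lra).
    rewrite <- (Wc_mi p o). apply Hmin; auto. apply Wc_channel. }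
  destruct (HW false) as [A [B S0]].
  assert (Dist : avg_distortion (dist_matrix u v) (Pp p) W =
    (1 - p) * W false true * u + p * W true false * v).
  { unfold avg_distortion, sum2, dist_matrix, Pp; simpl; ring. }
  split; intros Hlt HDe.
  - assert (R := Rows false ltac:(rewrite avg_Wc; lra)).
    rewrite Dist, <- (R false) in HD.
    assert (W false true * ((1 - p) * u - p * v) <= 0) by nra.
    assert (W false true <= 0) by nra. lra.
  - assert (R := Rows true ltac:(rewrite avg_Wc; lra)).
    rewrite Dist, <- (R false) in HD.
    assert (W false false * (p * v - (1 - p) * u) <= 0) by nra.
    nra.
Qed.

Lemma crs_ext : forall x y, (forall n, x n = y n) -> computable_real_seq x -> computable_real_seq y.
Proof.
  intros x y E [a [b [c [e [A [B [C [F H]]]]]]]]. exists a, b, c, e. repeat split; auto.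
  intros n N k L. rewrite <- E. auto.
Qed.

Lemma INR_le_pow2 : forall n, INR n <= 2 ^ n.
Proof.
  induction n. simpl; lra. rewrite S_INR. simpl. assert (1 <= 2 ^ n) by (apply pow_R1_Rle; lra). lra.
Qed.

Lemma exists_pow : forall r, exists B, r <= 2 ^ B.
Proof.
  intros r. destruct (archimed r) as [H _].
  destruct (Z_le_gt_dec (up r) 0) as [Z|Z].
  - exists 0%nat. apply IZR_le in Z. simpl. lra.
  - exists (Z.to_nat (up r)). pose proof (INR_le_pow2 (Z.to_nat (up r))).
    rewrite INR_IZR_INZ, Z2Nat.id in H0 by lia. lra.
Qed.

Lemma sep_lemma : forall A B C,
  (1 / 2 < rat_of A B C -> ifz (2 * B + C + 2 - 2 * A)%nat 1 0 = 1%nat) /\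
  (rat_of A B C < 1 / 2 -> ifz (2 * B + C + 2 - 2 * A)%nat 1 0 = 0%nat).
Proof.
  intros A B C. unfold rat_of. pose proof (INRp C) as Pc.
  split; intros H.
  - apply Rmult_lt_compat_r with (r := INR C + 1) in H; auto.
    replace ((INR A - INR B) / (INR C + 1) * (INR C + 1)) with (INR A - INR B) in H by (field; lra).
    assert (L : (2 * B + C + 1 < 2 * A)%nat).
    { apply INR_lt. rewrite !plus_INR, !mult_INR. simpl INR. lra. }
    replace (2 * B + C + 2 - 2 * A)%nat with 0%nat by lia. reflexivity.
  - apply Rmult_lt_compat_r with (r := INR C + 1) in H; auto.
    replace ((INR A - INR B) / (INR C + 1) * (INR C + 1)) with (INR A - INR B) in H by (field; lra).
    assert (L : (2 * A < 2 * B + C + 1)%nat).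
    { apply INR_lt. rewrite !plus_INR, !mult_INR. simpl INR. lra. }
    destruct (2 * B + C + 2 - 2 * A)%nat eqn:Z; [lia|reflexivity].
Qed.

Theorem mainTheorem7 :
  forall d01 d10 : R,
    computable_real d01 -> computable_real d10 -> 0 < d01 -> 0 < d10 ->
    exists (P : nat -> bool -> R) (D : nat -> R),
      (forall n, is_dist (P n)) /\ computable_dist_seq P /\
      (forall n, 0 <= D n) /\ computable_real_seq D /\
      forall F : (bool -> R) -> R -> (bool -> bool -> R),
        (forall n, P_opt (dist_matrix d01 d10) (D n) (P n) (F (P n) (D n))) ->
        ~ BM_computable F.
Proof.
  intros u v Cu Cv Hu Hv.
  set (X := fun n => u * (1 + delta n)).
  set (Z := fun n => X n + v).
  set (p := fun n => X n * / Z n).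
  set (D := fun n => Rmin (p n * v) ((1 - p n) * u)).
  assert (Db : forall n, - / 2 <= delta n <= / 2) by (intros n; apply Rabs_le_between, delta_bound).
  assert (Xp : forall n, 0 < X n) by (intros n; unfold X; specialize (Db n); nra).
  assert (Zp : forall n, 0 < Z n) by (intros n; unfold Z; specialize (Xp n); lra).
  assert (pr : forall n, 0 < p n < 1).
  { intros n. unfold p. specialize (Xp n). specialize (Zp n). split.
    - apply Rmult_lt_0_compat; auto. apply Rinv_0_lt_compat; auto.
    - apply (Rmult_lt_reg_r (Z n)); auto. rewrite Rmult_assoc, Rinv_l by lra. unfold Z. lra. }
  assert (q1 : forall n, 1 - p n = v * / Z n).
  { intros n. unfold p. specialize (Zp n). field_simplify_eq; [|lra]. unfold Z. ring. }
  exists (fun n => Pp (p n)), D.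
  destruct (exists_pow (2 * u + 2 * v + 2 / v + 2)) as [B HB].
  assert (Hv' : 0 < / v) by (apply Rinv_0_lt_compat; auto).
  assert (Bu : forall n : nat, Rabs u <= 2 ^ B) by (intros; rewrite Rabs_right by lra; unfold Rdiv in HB; lra).
  assert (Bv : forall n : nat, Rabs v <= 2 ^ B) by (intros; rewrite Rabs_right by lra; unfold Rdiv in HB; lra).
  assert (B1 : forall n : nat, Rabs 1 <= 2 ^ B) by (intros; rewrite Rabs_R1; unfold Rdiv in HB; lra).
  assert (Bd : forall n, Rabs (1 + delta n) <= 2 ^ B) by (intros n; specialize (Db n); rewrite Rabs_right by lra; unfold Rdiv in HB; lra).
  assert (BX : forall n, Rabs (X n) <= 2 ^ B) by (intros n; specialize (Db n); unfold X; rewrite Rabs_right by nra; unfold Rdiv in HB; nra).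
  assert (Lz : forall n, / 2 ^ B <= Z n).
  { intros n. specialize (Xp n). unfold Z. assert (/ v <= 2 ^ B) by (unfold Rdiv in HB; lra).
    assert (/ 2 ^ B <= / / v) by (apply Rinv_le_contravar; auto). rewrite Rinv_inv in H0. lra. }
  assert (BiZ : forall n, Rabs (/ Z n) <= 2 ^ B).
  { intros n. specialize (Zp n). rewrite Rabs_right by (left; apply Rinv_0_lt_compat; auto).
    rewrite <- (Rinv_inv (2 ^ B)). apply Rinv_le_contravar. apply Rinv_0_lt_compat, pow2_pos. apply Lz. }
  assert (Bp : forall n, Rabs (p n) <= 2 ^ B) by (intros n; specialize (pr n); rewrite Rabs_right by lra; unfold Rdiv in HB; lra).
  assert (Bq : forall n, Rabs (1 - p n) <= 2 ^ B) by (intros n; specialize (pr n); rewrite Rabs_right by lra; unfold Rdiv in HB; lra).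
  assert (C1 : computable_real_seq (fun _ => 1)).
  { apply (crs_ext (fun _ => rat_of 1 0 0)). intros; unfold rat_of; simpl; field. apply crs_const. }
  assert (Cd : computable_real_seq (fun n => 1 + delta n)) by (apply crs_add; auto; apply delta_computable).
  assert (CX : computable_real_seq X) by (apply (crs_mul (fun _ => u) _ B); auto).
  assert (CZ : computable_real_seq Z) by (apply crs_add; auto).
  assert (CiZ : computable_real_seq (fun n => / Z n)) by (apply (crs_inv Z B); auto).
  assert (Cp : computable_real_seq p) by (apply (crs_mul X (fun n => / Z n) B); auto).
  assert (Cq : computable_real_seq (fun n => 1 - p n)) by (apply crs_add; auto; apply crs_opp; auto).
  assert (CD : computable_real_seq D).
  { apply crs_min. apply (crs_mul p (fun _ => v) B); auto. apply (crs_mul (fun n => 1 - p n) (fun _ => u) B); auto. }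
  split; [|split; [|split; [|split]]].
  - intros n. unfold is_dist, Pp. specialize (pr n). simpl. lra.
  - split; [exact Cq | exact Cp].
  - intros n. unfold D. specialize (pr n). apply Rmin_glb; nra.
  - exact CD.
  - intros F Hopt HBM.
    assert (HC : computable_channel_seq (fun n => F (Pp (p n)) (D n))).
    { apply HBM; auto.
      - intros n. unfold is_dist, Pp. specialize (pr n). simpl. lra.
      - split; [exact Cq | exact Cp]. }
    specialize (HC false false). destruct HC as [a [b [c [e [Ca [Cb [Cc [Ce Happ]]]]]]]].
    set (W := fun n => F (Pp (p n)) (D n) false false) in *.
    assert (Key : forall n, (delta n < 0 -> W n = 1) /\ (0 < delta n -> W n = 0)).
    { intros n. destruct (forced u v (p n) (D n) (F (Pp (p n)) (D n)) Hu Hv (pr n) (Hopt n)) as [F1 F2].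
      specialize (Zp n). assert (iZ : 0 < / Z n) by (apply Rinv_0_lt_compat; auto).
      assert (Epv : p n * v = X n * (v * / Z n)) by (unfold p; ring).
      assert (Equ : (1 - p n) * u = u * (v * / Z n)) by (rewrite q1; ring).
      assert (vz : 0 < v * / Z n) by nra.
      split; intros Hd.
      - assert (Xl : X n < u) by (unfold X; nra).
        assert (Lt : p n * v < (1 - p n) * u) by (rewrite Epv, Equ; nra).
        apply F1; auto. unfold D. apply Rmin_left. lra.
      - assert (Xl : u < X n) by (unfold X; nra).
        assert (Lt : (1 - p n) * u < p n * v) by (rewrite Epv, Equ; nra).
        apply F2; auto. unfold D. apply Rmin_right. lra. }
    set (s := fun n => ifz (2 * b n (e n 2%nat) + c n (e n 2%nat) + 2 - 2 * a n (e n 2%nat))%nat 1%nat 0%nat).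
    assert (Ce2 : computable2 (fun n (_ : nat) => e n 2%nat)) by (apply (c2_compose e (fun n _ => n) (fun _ _ => 2%nat)); c2).
    assert (Ca2 : computable2 (fun n (_ : nat) => a n (e n 2%nat))) by (apply (c2_compose a (fun n _ => n) (fun n _ => e n 2%nat)); c2).
    assert (Cb2 : computable2 (fun n (_ : nat) => b n (e n 2%nat))) by (apply (c2_compose b (fun n _ => n) (fun n _ => e n 2%nat)); c2).
    assert (Cc2 : computable2 (fun n (_ : nat) => c n (e n 2%nat))) by (apply (c2_compose c (fun n _ => n) (fun n _ => e n 2%nat)); c2).
    assert (Cs : computable2 (fun n (_ : nat) => s n)) by (unfold s; c2).
    destruct Cs as [cs Hcs].
    set (S0 := RComp cs [RProj 0; RZero]).
    assert (RS : forall m, reval S0 [m] (s m)).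
    { intros m. econstructor. apply revals2; constructor. apply Hcs. }
    set (E := enc S0).
    destruct (comp_ok S0 [E] (s E) (RS E) 0%nat 0%nat) as [t Ht].
    change (run t (s0 E) = npair 0 (cons' (s E) 0)) in Ht.
    destruct (delta_sign E t (s E) Ht) as [N1 N2].
    assert (Ap := Happ E 2%nat (e E 2%nat) (le_n _)). apply Rabs_le_between in Ap.
    simpl (2 ^ 2) in Ap. cbv beta in Ap.
    change (F (Pp (p E)) (D E) false false) with (W E) in Ap.
    destruct (sep_lemma (a E (e E 2%nat)) (b E (e E 2%nat)) (c E (e E 2%nat))) as [S1 S2].
    destruct (Nat.eq_dec (s E) 0) as [Z0|Z0].
    + assert (WE : W E = 1) by (apply (proj1 (Key E)); auto).
      rewrite WE in Ap. assert (Hs1 : s E = 1%nat) by (apply S1; lra). lia.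
    + assert (WE : W E = 0) by (apply (proj2 (Key E)); auto).
      rewrite WE in Ap. assert (Hs1 : s E = 0%nat) by (apply S2; lra). lia.
Qed.
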